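(* Let $X$ be a compactum with compatible metric $d$, let $n\in\mathbb{N}$, and let $f:X\to X$ be a function. If $F_n(f)$ is Martelli's chaos, then $f$ is Martelli's chaos.
   Context: A compactum is a nondegenerate compact, perfect, Hausdorff topological space. $F_n(X)$ is the set of nonempty subsets of $X$ with at most $n$ points, with the Hausdorff metric $d_H$ induced by $d$, and $F_n(f)(A)=f(A)$. For a function $g$ on a metric space $(Z,D)$, the orbit of $x\in Z$ is $\{g^k(x):k\in\mathbb{Z}_+\}$; this orbit is unstable if there is $\delta>0$ such that for every neighborhood $U$ of $x$ there exist $y\in U$ and $k\in\mathbb{Z}_+$ with $D(g^k(x),g^k(y))>\delta$. $g$ is Martelli's chaos if there is $x_0\in Z$ whose orbit is dense in $Z$ and unstable. *)

(* Defs.v *)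
From Stdlib Require Import Reals List Lia.
Import ListNotations.
Open Scope R_scope.

Set Implicit Arguments.

Section Metric.
Variable X : Type.
Variable d : X -> X -> R.

Definition is_metric : Prop :=
  (forall x y, 0 <= d x y) /\
  (forall x y, d x y = 0 <-> x = y) /\
  (forall x y, d x y = d y x) /\
  (forall x y z, d x z <= d x y + d y z).

Definition open_set (U : X -> Prop) : Prop :=
  forall x, U x -> exists r, 0 < r /\ forall y, d x y < r -> U y.

Definition compact_space : Prop :=
  forall (I : Type) (U : I -> X -> Prop),
    (forall i, open_set (U i)) ->
    (forall x, exists i, U i x) ->
    exists l : list I, forall x, exists i, In i l /\ U i x.

Definition perfect_space : Prop :=
  forall x eps, 0 < eps -> exists y, y <> x /\ d x y < eps.

Definition nondegenerate : Prop := exists x y : X, x <> y.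

(** (X,d) is a compactum (a metric space is automatically Hausdorff). *)
Definition compactum : Prop :=
  is_metric /\ compact_space /\ perfect_space /\ nondegenerate.
End Metric.

Section Martelli.
Variable Z : Type.
Variable D : Z -> Z -> R.
Variable g : Z -> Z.

Definition dense_orbit (x : Z) : Prop :=
  forall z eps, 0 < eps -> exists k : nat, D (Nat.iter k g x) z < eps.

(* every neighbourhood of x contains a ball around x and conversely, so
   quantifying over balls is the same as over neighbourhoods *)
Definition unstable_orbit (x : Z) : Prop :=
  exists delta, 0 < delta /\
    forall eps, 0 < eps ->
      exists y k, D x y < eps /\ D (Nat.iter k g x) (Nat.iter k g y) > delta.

Definition martelli_chaos : Prop :=
  exists x0, dense_orbit x0 /\ unstable_orbit x0.
End Martelli.

(** A nonempty subset with at most n points is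
    represented by a list enumerating it (1 <= length <= n); the Hausdorff
    distance below only depends on the underlying set, so this is the
    usual F_n(X) up to identifying lists with the same elements. *)
Section Hyperspace.
Variable X : Type.
Variable d : X -> X -> R.

Fixpoint minl (h : X -> R) (l : list X) : R :=
  match l with
  | [] => 0
  | [b] => h b
  | b :: l' => Rmin (h b) (minl h l')
  end.

Fixpoint maxl (h : X -> R) (l : list X) : R :=
  match l with
  | [] => 0
  | [b] => h b
  | b :: l' => Rmax (h b) (maxl h l')
  end.

Definition dist_set (x : X) (B : list X) : R := minl (d x) B.

Definition hausdorff (A B : list X) : R :=
  Rmax (maxl (fun a => dist_set a B) A) (maxl (fun b => dist_set b A) B).

Definition Fn (n : nat) : Type :=
  { l : list X | (1 <= length l <= n)%nat }.

Definition dH (n : nat) (A B : Fn n) : R := hausdorff (proj1_sig A) (proj1_sig B).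

Definition Fn_map (n : nat) (f : X -> X) (A : Fn n) : Fn n :=
  exist _ (map f (proj1_sig A))
    (eq_ind_r (fun k => (1 <= k <= n)%nat) (proj2_sig A)
       (length_map f (proj1_sig A))).
End Hyperspace.

(* Main.v *)
Require Import Defs.
From Stdlib Require Import Reals.
From Stdlib Require Import Reals List Lia Lra Classical.
Import ListNotations.
Open Scope R_scope.
Set Implicit Arguments.

Section Aux.
Variable X : Type.

Lemma minl_cons2 (h : X -> R) a b l : minl h (a::b::l) = Rmin (h a) (minl h (b::l)).
Proof. reflexivity. Qed.
Lemma maxl_cons2 (h : X -> R) a b l : maxl h (a::b::l) = Rmax (h a) (maxl h (b::l)).
Proof. reflexivity. Qed.

Lemma minl_le (h : X -> R) l x : In x l -> minl h l <= h x.
Proof.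
  revert x; induction l as [|a l IH]; intros x Hx; [destruct Hx|].
  destruct l as [|b l'].
  - destruct Hx as [<-|[]]; simpl; lra.
  - rewrite minl_cons2. destruct Hx as [<-|Hx]. apply Rmin_l.
    eapply Rle_trans; [apply Rmin_r| apply IH; auto].
Qed.

Lemma maxl_ge (h : X -> R) l x : In x l -> h x <= maxl h l.
Proof.
  revert x; induction l as [|a l IH]; intros x Hx; [destruct Hx|].
  destruct l as [|b l'].
  - destruct Hx as [<-|[]]; simpl; lra.
  - rewrite maxl_cons2. destruct Hx as [<-|Hx]. apply Rmax_l.
    eapply Rle_trans; [apply IH; auto| apply Rmax_r].
Qed.

Lemma minl_lt (h : X -> R) l e : l <> [] -> minl h l < e -> exists x, In x l /\ h x < e.
Proof.
  induction l as [|a l IH]; intros Hne Hl; [congruence|].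
  destruct l as [|b l'].
  - exists a; simpl in *; auto.
  - rewrite minl_cons2 in Hl. unfold Rmin in Hl.
    destruct (Rle_dec (h a) (minl h (b :: l'))).
    + exists a; simpl; auto.
    + destruct IH as [x [Hx1 Hx2]]; [congruence|lra|]. exists x; simpl; auto.
Qed.

Lemma maxl_gt (h : X -> R) l e : l <> [] -> maxl h l > e -> exists x, In x l /\ h x > e.
Proof.
  induction l as [|a l IH]; intros Hne Hl; [congruence|].
  destruct l as [|b l'].
  - exists a; simpl in *; auto.
  - rewrite maxl_cons2 in Hl. unfold Rmax in Hl.
    destruct (Rle_dec (h a) (maxl h (b :: l'))).
    + destruct IH as [x [Hx1 Hx2]]; [congruence|lra|]. exists x; simpl; auto.
    + exists a; simpl; auto.
Qed.

Lemma pigeon (P : X -> R -> Prop) (l : list X) :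
  (forall a e e', P a e -> e <= e' -> P a e') ->
  (forall e, 0 < e -> exists a, In a l /\ P a e) ->
  exists a, In a l /\ forall e, 0 < e -> P a e.
Proof.
  intros Hmon. induction l as [|a l IH]; intros H.
  - destruct (H 1 Rlt_0_1) as [a [[] _]].
  - destruct (classic (forall e, 0 < e -> P a e)) as [Ha|Ha].
    + exists a; simpl; auto.
    + apply not_all_ex_not in Ha. destruct Ha as [e0 He0].
      apply imply_to_and in He0. destruct He0 as [He0 Hn].
      destruct IH as [b [Hb1 Hb2]].
      * intros e He. destruct (H (Rmin e e0)) as [b [[<-|Hb] Pb]].
        { apply Rmin_pos; auto. }
        -- exfalso; apply Hn; eapply Hmon; [exact Pb|apply Rmin_r].
        -- exists b; split; auto; eapply Hmon; [exact Pb|apply Rmin_l].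
      * exists b; simpl; auto.
Qed.

Lemma iter_Fn (n : nat) (f : X -> X) k (A : Fn X n) :
  proj1_sig (Nat.iter k (Fn_map f) A) = map (Nat.iter k f) (proj1_sig A).
Proof.
  induction k as [|k IH]; simpl.
  - rewrite map_id. reflexivity.
  - rewrite IH, map_map. reflexivity.
Qed.

End Aux.

Theorem theorem13 (X : Type) (d : X -> X -> R) (n : nat) (f : X -> X) :
  compactum d ->
  martelli_chaos (@dH X d n) (@Fn_map X n f) ->
  martelli_chaos d f.
Proof.
  intros [[Hpos [Hz [Hsym Htri]]] _] [A0 [Hden [delta [Hdel Hun]]]].
  destruct A0 as [l Hl]. simpl in *.
  assert (Hne : l <> []) by (intro; subst; simpl in Hl; lia).
  assert (Hd : forall a, In a l -> dense_orbit d f a).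
  { intros a Ha z eps He.
    assert (Hz1 : (1 <= length [z] <= n)%nat) by (simpl; lia).
    destruct (Hden (exist _ [z] Hz1) eps He) as [k Hk].
    exists k. unfold dH in Hk. rewrite iter_Fn in Hk. simpl in Hk.
    unfold hausdorff in Hk.
    assert (Hm := maxl_ge (fun a0 => dist_set d a0 [z]) (map (Nat.iter k f) l)
                    (Nat.iter k f a) (in_map _ _ _ Ha)).
    simpl in Hm. unfold dist_set in Hm. simpl in Hm.
    pose proof (Rmax_l (maxl (fun a0 : X => dist_set d a0 [z]) (map (Nat.iter k f) l))
                 (maxl (fun b : X => dist_set d b (map (Nat.iter k f) l)) [z])).
    unfold dist_set in *; simpl in *. eapply Rle_lt_trans; [exact Hm|]. eapply Rle_lt_trans; [exact H|exact Hk]. }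
  set (P := fun (a : X) (e : R) => exists y k, d a y < e /\ d (Nat.iter k f a) (Nat.iter k f y) > delta).
  destruct (pigeon P l) as [a [Ha HP]].
  - intros a e e' [y [k [H1 H2]]] Hle. exists y, k; split; auto; lra.
  - intros e He. destruct (Hun e He) as [[m Hm] [k [H1 H2]]].
    unfold dH in H1, H2. rewrite !iter_Fn in H2. simpl in H1, H2.
    assert (Hmne : m <> []) by (intro; subst; simpl in Hm; lia).
    unfold hausdorff in H1, H2.
    assert (Hmap : forall l0, l0 <> [] -> map (Nat.iter k f) l0 <> []).
    { intros l0 H0 H0'. apply H0. destruct l0; simpl in *; congruence. }
    unfold Rmax at 1 in H2.
    destruct (Rle_dec _ _) as [Hr|Hr].
    + apply maxl_gt in H2; [|apply Hmap; auto].
      destruct H2 as [fb [Hfb Hfb2]]. apply in_map_iff in Hfb.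
      destruct Hfb as [b [<- Hb]].
      assert (Hb1 : dist_set d b l < e).
      { pose proof (maxl_ge (fun b0 => dist_set d b0 l) m b Hb).
        pose proof (Rmax_r (maxl (fun a : X => dist_set d a m) l) (maxl (fun b : X => dist_set d b l) m)).
        simpl in *; lra. }
      apply minl_lt in Hb1; auto. destruct Hb1 as [a [Ha Hab]].
      exists a; split; auto. exists b, k. split. rewrite Hsym; auto.
      pose proof (minl_le (d (Nat.iter k f b)) _ _ (in_map (Nat.iter k f) _ _ Ha)).
      unfold dist_set in Hfb2. simpl in Hfb2. rewrite Hsym. lra.
    + assert (H2' : maxl (fun a : X => dist_set d a (map (Nat.iter k f) m)) (map (Nat.iter k f) l) > delta) by lra.
      clear H2.
      apply maxl_gt in H2'; [|apply Hmap; auto].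
      destruct H2' as [fa [Hfa Hfa2]]. apply in_map_iff in Hfa.
      destruct Hfa as [a [<- Ha]].
      assert (Ha1 : dist_set d a m < e).
      { pose proof (maxl_ge (fun a0 => dist_set d a0 m) l a Ha).
        pose proof (Rmax_l (maxl (fun a : X => dist_set d a m) l) (maxl (fun b : X => dist_set d b l) m)).
        simpl in *; lra. }
      apply minl_lt in Ha1; auto. destruct Ha1 as [b [Hb Hab]].
      exists a; split; auto. exists b, k. split; auto.
      pose proof (minl_le (d (Nat.iter k f a)) _ _ (in_map (Nat.iter k f) _ _ Hb)).
      unfold dist_set in Hfa2. simpl in Hfa2. lra.
  - exists a. split; [apply Hd; auto|]. exists delta; split; auto.
Qed.
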